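(* In the category $\mathsf{Top}_0$ of T$_0$-spaces and continuous maps, a space is finitely generated with respect to embeddings if, and only if, it is finite.
   Context: An embedding is an injective continuous map $m:X\to Y$ such that every open set of $X$ has the form $m^{-1}(U)$ for some open $U\subseteq Y$. An object $X$ of a category $\mathcal{C}$ is finitely generated w.r.t. a class $\mathcal{M}$ of monomorphisms if for every directed diagram $(Z_i)_{i\in I}$ in $\mathcal{C}$ (indexed by a directed poset, i.e. every finite subset has an upper bound) whose connecting morphisms $z_{i,j}$ lie in $\mathcal{M}$, with colimit cocone $c_i:Z_i\to Z$ in $\mathcal{C}$, every morphism $f:X\to Z$ factorizes as $f=c_i\cdot g$ for some $i$ and $g:X\to Z_i$, and if also $f=c_i\cdot g'$ then $z_{i,j}\cdot g=z_{i,j}\cdot g'$ for some connecting morphism $z_{i,j}$. Here $\mathcal{M}$ is the class of morphisms of $\mathsf{Top}_0$ which are embeddings. *)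

(* Defs.v *)
From Stdlib Require Import List.

Record Top0 : Type := {
  pt :> Type;
  isOpen : (pt -> Prop) -> Prop;
  open_full : isOpen (fun _ => True);
  open_inter : forall U V, isOpen U -> isOpen V -> isOpen (fun x => U x /\ V x);
  open_union : forall F : (pt -> Prop) -> Prop,
      (forall U, F U -> isOpen U) -> isOpen (fun x => exists U, F U /\ U x);
  t0_sep : forall x y : pt, x <> y ->
      exists U, isOpen U /\ ~ (U x <-> U y)
}.

Definition continuous {X Y : Top0} (f : X -> Y) : Prop :=
  forall V, isOpen Y V -> isOpen X (fun x => V (f x)).

Definition embedding {X Y : Top0} (m : X -> Y) : Prop :=
  (forall x y, m x = m y -> x = y) /\ continuous m /\
  (forall U, isOpen X U -> exists V, isOpen Y V /\ forall x, U x <-> V (m x)).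

Definition directed_poset {I : Type} (le : I -> I -> Prop) : Prop :=
  (forall i, le i i) /\
  (forall i j k, le i j -> le j k -> le i k) /\
  (forall i j, le i j -> le j i -> i = j) /\
  (forall s : list I, exists j, forall i, In i s -> le i j).

Definition embedding_diagram {I : Type} (le : I -> I -> Prop)
  (Z : I -> Top0) (z : forall i j, le i j -> Z i -> Z j) : Prop :=
  (forall i j (h : le i j), embedding (z i j h)) /\
  (forall i (h : le i i) x, z i i h x = x) /\
  (forall i j k (hij : le i j) (hjk : le j k) (hik : le i k) x,
      z j k hjk (z i j hij x) = z i k hik x).

Definition is_colimit {I : Type} (le : I -> I -> Prop)
  (Z : I -> Top0) (z : forall i j, le i j -> Z i -> Z j)
  (C : Top0) (c : forall i, Z i -> C) : Prop :=
  (forall i, continuous (c i)) /\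
  (forall i j (h : le i j) x, c j (z i j h x) = c i x) /\
  (forall (Y : Top0) (d : forall i, Z i -> Y),
      (forall i, continuous (d i)) ->
      (forall i j (h : le i j) x, d j (z i j h x) = d i x) ->
      exists u : C -> Y, continuous u /\ (forall i x, u (c i x) = d i x) /\
        (forall u' : C -> Y, continuous u' -> (forall i x, u' (c i x) = d i x) ->
           forall y, u' y = u y)).

Definition fin_gen_emb (X : Top0) : Prop :=
  forall (I : Type) (le : I -> I -> Prop) (Z : I -> Top0)
         (z : forall i j, le i j -> Z i -> Z j) (C : Top0) (c : forall i, Z i -> C),
    directed_poset le -> embedding_diagram le Z z -> is_colimit le Z z C c ->
    (forall f : X -> C, continuous f ->
       exists i (g : X -> Z i), continuous g /\ forall x, f x = c i (g x)) /\
    (forall i (g g' : X -> Z i), continuous g -> continuous g' ->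
       (forall x, c i (g x) = c i (g' x)) ->
       exists j (h : le i j), forall x, z i j h (g x) = z i j h (g' x)).

Definition finite_space (X : Top0) : Prop :=
  exists s : list X, forall x : X, In x s.

(* Main.v *)
Require Import Defs.
From Stdlib Require Import List Classical ClassicalEpsilon FunctionalExtensionality PropExtensionality ProofIrrelevance Lia Arith.

Lemma open_ext (X : Top0) (U V : X -> Prop) :
  isOpen X U -> (forall x, U x <-> V x) -> isOpen X V.
Proof.
  intros H E. assert (U = V) as ->; auto.
  apply functional_extensionality; intro; apply propositional_extensionality; auto.
Qed.

Lemma open_empty (X : Top0) : isOpen X (fun _ => False).
Proof.
  eapply open_ext. apply (open_union X (fun _ => False)). intros; contradiction.
  intros x; split. intros [U [[] _]]. intros [].
Qed.

Lemma sig_eq {A : Type} {P : A -> Prop} (p q : {x | P x}) :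
  proj1_sig p = proj1_sig q -> p = q.
Proof.
  destruct p as [x px], q as [y py]; simpl; intros e; subst.
  f_equal; apply proof_irrelevance.
Qed.

Definition subT (C : Top0) (P : C -> Prop) : Top0.
Proof.
refine {| pt := {c : C | P c};
  isOpen := fun U => exists V, isOpen C V /\ forall p, U p <-> V (proj1_sig p) |}.
- exists (fun _ => True). split; [apply open_full| tauto].
- intros U V [U' [HU EU]] [V' [HV EV]]. exists (fun x => U' x /\ V' x).
  split. apply open_inter; auto. intro p; rewrite EU, EV; tauto.
- intros F HF.
  exists (fun c => exists V, (isOpen C V /\ exists U, F U /\ forall p, U p <-> V (proj1_sig p)) /\ V c).
  split. apply open_union. intros V [HV _]; exact HV.
  intros p; split.
  + intros [U [FU Up]]. destruct (HF U FU) as [V [HV EV]]. exists V.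
    split. split; [auto| exists U; auto]. apply EV; auto.
  + intros [V [[HV [U [FU EU]]] Vp]]. exists U. split; auto. apply EU; auto.
- intros x y ne. assert (proj1_sig x <> proj1_sig y) as H.
  { intro e. apply ne. apply sig_eq; auto. }
  destruct (t0_sep C _ _ H) as [V [HV NV]].
  exists (fun p => V (proj1_sig p)). split; auto. exists V; split; auto; tauto.
Defined.

Definition Sier : Top0.
Proof.
refine {| pt := bool; isOpen := fun P => P false -> P true |}.
- auto.
- intros U V HU HV [a b]; auto.
- intros F HF [U [FU Uf]]. exists U; split; [exact FU | exact (HF U FU Uf)].
- intros x y ne. exists (fun b => b = true). split. intros _; reflexivity.
  destruct x, y; try congruence; intros [h1 h2]; [discriminate (h1 eq_refl) | discriminate (h2 eq_refl)].
Defined.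

Lemma family_open I le Z z C c (HC : @is_colimit I le Z z C c)
  (U : forall j, Z j -> Prop) (HU : forall j, isOpen (Z j) (U j))
  (HUc : forall j k (h : le j k) x, U k (z j k h x) <-> U j x) :
  exists W, isOpen C W /\ forall j x, W (c j x) <-> U j x.
Proof.
  destruct HC as [Hc1 [Hc2 Hc3]].
  set (d := fun j (x : Z j) => if excluded_middle_informative (U j x) then true else false).
  destruct (Hc3 Sier (fun j x => d j x)) as [u [Hu [Hud _]]].
  - intros j P HP. simpl in HP.
    destruct (classic (P false)) as [Pf|nPf].
    + apply open_ext with (fun _ => True). apply open_full. intros x; split; auto.
      intros _. unfold d; destruct excluded_middle_informative; auto.
    + destruct (classic (P true)) as [Pt|nPt].
      * apply open_ext with (U j). auto. intros x; unfold d; destruct excluded_middle_informative; tauto.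
      * apply open_ext with (fun _ => False). apply open_empty. intros x; unfold d; destruct excluded_middle_informative; tauto.
  - intros j k h x. unfold d. 
    destruct (excluded_middle_informative (U k _)), (excluded_middle_informative (U j x)); auto;
    exfalso; rewrite HUc in *; tauto.
  - exists (fun y => u y = true). split.
    + apply (Hu (fun b => b = true)). simpl. intros; reflexivity.
    + intros j x. rewrite Hud. unfold d. destruct excluded_middle_informative; split; intros; try tauto; try congruence.
Qed.
Lemma z_pi I le Z z (Hd : @directed_poset I le) (HD : @embedding_diagram I le Z z)
  i j (h h' : le i j) x : z i j h x = z i j h' x.
Proof.
  destruct Hd as [Hr _]. destruct HD as [_ [Hid Hcomp]].
  rewrite <- (Hcomp i j j h (Hr j) h' x). rewrite Hid. reflexivity.
Qed.

Lemma sep_lemma I le Z z C c (Hd : @directed_poset I le) (HD : @embedding_diagram I le Z z)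
  (HC : is_colimit le Z z C c)
  i (a b : Z i) V : isOpen (Z i) V -> V a -> ~ V b ->
  exists W, isOpen C W /\ W (c i a) /\ ~ W (c i b).
Proof.
  intros HV Va Vb.
  pose proof Hd as [Hr [Ht [_ Hub]]]. pose proof HD as [Hemb [Hid Hcomp]].
  set (U := fun j (x : Z j) => exists k (hjk : le j k) (hik : le i k) (V' : Z k -> Prop),
     isOpen (Z k) V' /\ V' (z j k hjk x) /\ ~ V' (z i k hik b)).
  destruct (family_open I le Z z C c HC U) as [W [HW EW]].
  - intros j.
    apply open_ext with (fun x => exists S, (exists k (hjk : le j k) (hik : le i k) (V' : Z k -> Prop),
       isOpen (Z k) V' /\ ~ V' (z i k hik b) /\ S = (fun x => V' (z j k hjk x))) /\ S x).
    + apply open_union. intros S [k [hjk [hik [V' [H1 [H2 ->]]]]]].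
      destruct (Hemb j k hjk) as [_ [Hc _]]. apply Hc; auto.
    + intros x; split.
      * intros [S [[k [hjk [hik [V' [H1 [H2 ->]]]]]] Sx]]. exists k, hjk, hik, V'; auto.
      * intros [k [hjk [hik [V' [H1 [H2 H3]]]]]]. exists (fun x => V' (z j k hjk x)).
        split; auto. exists k, hjk, hik, V'; auto.
  - intros j k h x. split.
    + intros [m [hkm [him [V' [H1 [H2 H3]]]]]].
      exists m, (Ht _ _ _ h hkm), him, V'. rewrite <- (Hcomp j k m h hkm). auto.
    + intros [m [hjm [him [V' [H1 [H2 H3]]]]]].
      destruct (Hub (k :: m :: nil)) as [n Hn].
      assert (hkn : le k n) by (apply Hn; simpl; auto).
      assert (hmn : le m n) by (apply Hn; simpl; auto).
      destruct (Hemb m n hmn) as [_ [_ Hi]].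
      destruct (Hi V' H1) as [V'' [HV'' EV'']].
      exists n, hkn, (Ht _ _ _ him hmn), V''. split; auto. split.
      * rewrite (Hcomp j k n h hkn (Ht _ _ _ hjm hmn)).
        rewrite <- (Hcomp j m n hjm hmn). apply EV''; auto.
      * rewrite <- (Hcomp i m n him hmn). rewrite <- EV''. auto.
  - exists W. split; auto. split.
    + apply EW. exists i, (Hr i), (Hr i), V. rewrite !Hid. auto.
    + rewrite EW. intros [m [h1 [h2 [V' [H1 [H2 H3]]]]]].
      apply H3. rewrite (z_pi I le Z z Hd HD i m h2 h1). auto.
Qed.

Lemma c_inj I le Z z C c (Hd : @directed_poset I le) (HD : @embedding_diagram I le Z z)
  (HC : is_colimit le Z z C c) i (a b : Z i) : c i a = c i b -> a = b.
Proof.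
  intros E. destruct (classic (a = b)) as [|ne]; auto. exfalso.
  destruct (t0_sep _ a b ne) as [V [HV NV]].
  destruct (classic (V a)) as [Va|Va].
  - assert (~ V b) by tauto.
    destruct (sep_lemma I le Z z C c Hd HD HC i a b V HV Va H) as [W [_ [W1 W2]]].
    rewrite E in W1; auto.
  - assert (V b) by tauto.
    destruct (sep_lemma I le Z z C c Hd HD HC i b a V HV H Va) as [W [_ [W1 W2]]].
    rewrite E in W2; auto.
Qed.

Lemma c_surj I le Z z C c (HC : @is_colimit I le Z z C c) :
  forall y, exists i x, c i x = y.
Proof.
  pose proof HC as [Hc1 [Hc2 Hc3]].
  set (P := fun y : C => exists i x, c i x = y).
  set (d := fun i x => exist P (c i x) (ex_intro _ i (ex_intro _ x eq_refl)) : subT C P).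
  destruct (Hc3 (subT C P) d) as [u [Hu [Hud _]]].
  - intros i V [V' [HV' EV']]. apply open_ext with (fun x => V' (c i x)).
    apply Hc1; auto. intros x; rewrite EV'; simpl; tauto.
  - intros i j h x. apply sig_eq. simpl. auto.
  - destruct (Hc3 C c Hc1 Hc2) as [u0 [_ [_ Hun]]].
    intros y.
    assert (E1 : y = u0 y).
    { apply (Hun (fun y => y)). intros V HV; exact HV. auto. }
    assert (E2 : proj1_sig (u y) = u0 y).
    { apply (Hun (fun y => proj1_sig (u y))).
      - intros V HV. apply (Hu (fun p => V (proj1_sig p))). exists V; split; auto; tauto.
      - intros i x. rewrite Hud. reflexivity. }
    rewrite E1, <- E2. exact (proj2_sig (u y)).
Qed.
Lemma finite_fg (X : Top0) : finite_space X -> fin_gen_emb X.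
Proof.
  intros [s Hs] I le Z z C c Hd HD HC.
  pose proof Hd as [Hr [Ht [_ Hub]]]. pose proof HD as [Hemb [Hid Hcomp]].
  pose proof HC as [Hc1 [Hc2 Hc3]].
  split.
  - intros f Hf.
    assert (Hl : forall l : list X, exists i, forall x, In x l -> exists w : Z i, f x = c i w).
    { induction l as [|x l IH].
      - destruct (Hub nil) as [j _]. exists j. intros x [].
      - destruct IH as [i Hi]. destruct (c_surj I le Z z C c HC (f x)) as [k [w Hw]].
        destruct (Hub (i :: k :: nil)) as [m Hm].
        assert (him : le i m) by (apply Hm; simpl; auto).
        assert (hkm : le k m) by (apply Hm; simpl; auto).
        exists m. intros y [<-|Hy].
        + exists (z k m hkm w). rewrite Hc2. auto.
        + destruct (Hi y Hy) as [w' Hw']. exists (z i m him w'). rewrite Hc2. auto. }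
    destruct (Hl s) as [i Hi].
    set (g := fun x => proj1_sig (constructive_indefinite_description _ (Hi x (Hs x)))).
    assert (Hg : forall x, f x = c i (g x)).
    { intros x. unfold g. destruct constructive_indefinite_description; auto. }
    exists i, g. split; auto.
    intros V HV.
    apply open_ext with (fun x => exists O, (isOpen X O /\ forall y, O y -> V (g y)) /\ O x).
    + apply open_union. intros O [HO _]; auto.
    + intros x; split.
      * intros [O [[_ HO] Ox]]; auto.
      * intros Vx.
        assert (Hl2 : forall l : list X, exists O, isOpen X O /\ O x /\
                  forall y, In y l -> ~ V (g y) -> ~ O y).
        { induction l as [|y l IH].
          - exists (fun _ => True). split; [apply open_full|]. split; auto.
          - destruct IH as [O [HO [Ox HOl]]].
            destruct (classic (V (g y))) as [Vy|Vy].
            + exists O. split; auto. split; auto. intros y' [<-|Hy']; auto.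
            + destruct (sep_lemma I le Z z C c Hd HD HC i (g x) (g y) V HV Vx Vy)
                as [W [HW [W1 W2]]].
              exists (fun x' => O x' /\ W (f x')). split.
              * apply open_inter; auto.
              * split. split; auto. rewrite Hg; auto.
                intros y' [<-|Hy'] Vy' [Oy' Wy'].
                -- rewrite Hg in Wy'; auto.
                -- apply (HOl y' Hy' Vy'); auto. }
        destruct (Hl2 s) as [O [HO [Ox HOs]]].
        exists O. split; auto. split; auto.
        intros y Oy. destruct (classic (V (g y))) as [|nV]; auto.
        exfalso; apply (HOs y (Hs y) nV Oy).
  - intros i g g' _ _ E. exists i, (Hr i). intros x. rewrite !Hid.
    apply (c_inj I le Z z C c Hd HD HC i). auto.
Qed.
Definition Nb (n : nat) (p q : nat -> Prop) := forall k, k <= n -> p k -> q k.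

Definition Cs : Top0.
Proof.
refine {| pt := nat -> Prop;
  isOpen := fun W => forall p, W p -> exists n, forall q, Nb n p q -> W q |}.
- intros p _; exists 0; auto.
- intros U V HU HV p [Up Vp]. destruct (HU p Up) as [n1 H1]; destruct (HV p Vp) as [n2 H2].
  exists (max n1 n2). intros q Hq; split; [apply H1|apply H2]; intros k hk; apply Hq; lia.
- intros F HF p [U [FU Up]]. destruct (HF U FU p Up) as [n Hn]. exists n. intros q Hq. exists U; auto.
- intros p q ne. assert (exists k, ~ (p k <-> q k)) as [k Hk].
  { apply NNPP; intro H. apply ne. apply functional_extensionality; intro k.
    apply propositional_extensionality. apply NNPP; intro H'. apply H; exists k; auto. }
  exists (fun r => r k). split; auto.
  intros r rk. exists k. intros q' Hq. apply Hq; auto.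
Defined.

Definition col (n : nat) := n - Nat.sqrt n * Nat.sqrt n.

Lemma col_inf i bd : exists n, col n = i /\ bd < n.
Proof.
  set (k := i + bd + 1). exists (k * k + i).
  assert (Nat.sqrt (k * k + i) = k) as E.
  { apply Nat.sqrt_unique. unfold k; split; nia. }
  unfold col; rewrite E. split; [lia| unfold k; nia].
Qed.

Definition K0 (B : nat -> Prop) := exists m, forall i, m < i -> exists bd, forall n, B n -> col n = i -> n <= bd.

Lemma K0_mono (A B : nat -> Prop) : K0 B -> (forall n, A n -> B n) -> K0 A.
Proof.
  intros [m Hm] AB. exists m. intros i hi. destruct (Hm i hi) as [bd Hbd]. exists bd; auto.
Qed.

Lemma K0_union (A B : nat -> Prop) : K0 A -> K0 B -> K0 (fun n => A n \/ B n).
Proof.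
  intros [m1 H1] [m2 H2]. exists (max m1 m2). intros i hi.
  destruct (H1 i) as [b1 Hb1]; [lia|]. destruct (H2 i) as [b2 Hb2]; [lia|].
  exists (max b1 b2). intros n [An|Bn] cn; [specialize (Hb1 n An cn)|specialize (Hb2 n Bn cn)]; lia.
Qed.

Lemma K0_atmost1 (B : nat -> Prop) : (forall n n', B n -> B n' -> n = n') -> K0 B.
Proof.
  intros H. exists 0. intros i _. destruct (classic (exists n, B n)) as [[n0 Hn0]|Hn].
  - exists n0. intros n Bn _. rewrite (H n n0 Bn Hn0). lia.
  - exists 0. intros n Bn. exfalso; eauto.
Qed.

Lemma K0_full : ~ K0 (fun _ => True).
Proof.
  intros [m Hm]. destruct (Hm (S m)) as [bd Hbd]; [lia|].
  destruct (col_inf (S m) bd) as [n [cn ln]]. specialize (Hbd n I cn). lia.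
Qed.

Definition J (d : nat -> Cs) (B : Cs -> Prop) := K0 (fun n => B (d n)).

Lemma final_open (d : nat -> Cs) (dinj : forall a b, d a = d b -> a = b) (W : Cs -> Prop) :
  (forall B, J d B -> exists V, isOpen Cs V /\ forall y, B y -> (W y <-> V y)) -> isOpen Cs W.
Proof.
  intros H p Wp. apply NNPP; intro Hn.
  assert (Ha : forall n, exists q, Nb n p q /\ ~ W q).
  { intro n. apply NNPP; intro H1. apply Hn. exists n. intros q Hq. apply NNPP; intro H2.
    apply H1. exists q; auto. }
  set (a := fun n => proj1_sig (constructive_indefinite_description _ (Ha n))).
  assert (Ha' : forall n, Nb n p (a n) /\ ~ W (a n)).
  { intros n. unfold a. destruct constructive_indefinite_description; auto. }
  set (A := fun y => y = p \/ exists n, a n = y).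
  destruct (classic (J d A)) as [HJ|HJ].
  - destruct (H A HJ) as [V [HV EV]]. destruct (HV p) as [m Hm].
    { apply EV; [left; auto| auto]. }
    apply (proj2 (Ha' m)). apply EV. right; exists m; auto. apply Hm, Ha'.
  - assert (Hi : exists i, forall bd, exists n, A (d n) /\ col n = i /\ bd < n).
    { apply NNPP; intro H1. apply HJ. exists 0. intros i _. apply NNPP; intro H2.
      apply H1. exists i. intro bd. apply NNPP; intro H3. apply H2. exists bd.
      intros n An cn. apply NNPP; intro H4. apply H3. exists n. split; auto. split; auto. lia. }
    destruct Hi as [i Hi].
    set (B := fun y => y = p \/ exists n k, a n = y /\ d k = y /\ col k = i).
    assert (HJB : J d B).
    { exists i. intros i' Hi'. destruct (classic (exists k, d k = p)) as [[k0 Hk0]|Hnp].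
      - exists k0. intros n [Hn0 | [n' [k [E1 [E2 E3]]]]] Hc.
        + rewrite <- Hk0 in Hn0. apply dinj in Hn0. lia.
        + apply dinj in E2. subst. lia.
      - exists 0. intros n [Hn0 | [n' [k [E1 [E2 E3]]]]] Hc.
        + exfalso; apply Hnp; eauto.
        + apply dinj in E2. subst. lia. }
    destruct (H B HJB) as [V [HV EV]]. destruct (HV p) as [m Hm].
    { apply EV; [left; auto| auto]. }
    assert (Hbd : forall m', exists bd, forall k, (d k = p \/ exists n, n < m' /\ d k = a n) -> k <= bd).
    { induction m' as [|m' IH].
      - destruct (classic (exists k, d k = p)) as [[k0 Hk0]|Hnp].
        + exists k0. intros k [Ek|[n [Hn1 _]]]; [|lia]. rewrite <- Hk0 in Ek. apply dinj in Ek. lia.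
        + exists 0. intros k [Ek|[n [Hn1 _]]]; [|lia]. exfalso; eauto.
      - destruct IH as [bd Hbd].
        destruct (classic (exists k, d k = a m')) as [[k1 Hk1]|Hna].
        + exists (max bd k1). intros k [Ek|[n [Hn1 Ek]]].
          * specialize (Hbd k (or_introl Ek)). lia.
          * destruct (Nat.eq_dec n m') as [->|ne].
            -- rewrite <- Hk1 in Ek. apply dinj in Ek. lia.
            -- assert (n < m') by lia. specialize (Hbd k (or_intror (ex_intro _ n (conj H0 Ek)))). lia.
        + exists bd. intros k [Ek|[n [Hn1 Ek]]].
          * apply Hbd; auto.
          * destruct (Nat.eq_dec n m') as [->|ne].
            -- exfalso; eauto.
            -- apply Hbd. right. exists n. split; auto. lia. }
    destruct (Hbd m) as [bd Hb].
    destruct (Hi bd) as [k [Ak [ck lk]]].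
    destruct Ak as [Ek | [n En]].
    + specialize (Hb k (or_introl Ek)). lia.
    + destruct (le_lt_dec m n) as [mn|nm].
      * apply (proj2 (Ha' n)). apply EV.
        -- right. exists n, k. auto.
        -- apply Hm. intros j hj pj. apply (proj1 (Ha' n)); auto; lia.
      * specialize (Hb k (or_intror (ex_intro _ n (conj nm (eq_sym En))))). lia.
Qed.
Definition spec (X : Top0) (x y : X) := forall U, isOpen X U -> U x -> U y.

Definition fmap (X : Top0) (xs : nat -> X) (x : X) : Cs := fun n => ~ spec X x (xs n).

Lemma imp_open (X : Top0) (P : Prop) (V : X -> Prop) : isOpen X V -> isOpen X (fun y => P -> V y).
Proof.
  intros HV. destruct (classic P) as [p|np].
  - apply open_ext with V; auto. intros; tauto.
  - apply open_ext with (fun _ => True). apply open_full. intros; tauto.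
Qed.

Lemma nspec_open (X : Top0) (b : X) : isOpen X (fun y => ~ spec X y b).
Proof.
  apply open_ext with (fun y => exists U, (isOpen X U /\ ~ U b) /\ U y).
  - apply open_union. intros U [HU _]; auto.
  - intros y; split.
    + intros [U [[HU Ub] Uy]] Hs. apply Ub, Hs; auto.
    + intros Hs. apply NNPP; intro H. apply Hs. intros U HU Uy. apply NNPP; intro Ub.
      apply H. exists U; auto.
Qed.

Lemma fmap_cont (X : Top0) (xs : nat -> X) : @continuous X Cs (fmap X xs).
Proof.
  intros W HW.
  apply open_ext with (fun x => exists O, (isOpen X O /\ forall y, O y -> W (fmap X xs y)) /\ O x).
  - apply open_union. intros O [HO _]; auto.
  - intros x; split.
    + intros [O [[_ HO] Ox]]; auto.
    + intros Wx. destruct (HW _ Wx) as [n Hn].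
      exists (fun y => Nb n (fmap X xs x) (fmap X xs y)). split; [split|].
      * clear Hn. induction n as [|n IH].
        -- apply open_ext with (fun y => fmap X xs x 0 -> fmap X xs y 0).
           apply imp_open, nspec_open.
           intros y; split. intros H k hk. assert (k = 0) by lia; subst; auto. intros H; apply H; auto.
        -- apply open_ext with (fun y => Nb n (fmap X xs x) (fmap X xs y) /\
                                 (fmap X xs x (S n) -> fmap X xs y (S n))).
           apply open_inter; auto. apply imp_open, nspec_open.
           intros y; split.
           ++ intros [H1 H2] k hk. destruct (Nat.eq_dec k (S n)) as [->|ne]; auto. apply H1; lia.
           ++ intros H; split. intros k hk; apply H; lia. apply H; lia.
      * intros y Hy. apply Hn; auto.
      * intros k _ h; auto.
Qed.

Lemma spec_antisym (X : Top0) (a b : X) : spec X a b -> spec X b a -> a = b.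
Proof.
  intros H1 H2. apply NNPP; intro ne. destruct (t0_sep X a b ne) as [V [HV NV]].
  apply NV; split; [apply H1|apply H2]; auto.
Qed.

Lemma fmap_inj (X : Top0) (xs : nat -> X) (Hinj : forall a b, xs a = xs b -> a = b) a b :
  fmap X xs (xs a) = fmap X xs (xs b) -> a = b.
Proof.
  intros E. apply Hinj. apply spec_antisym.
  - assert (H := f_equal (fun p : Cs => p b) E). simpl in H. unfold fmap in H.
    apply NNPP; intro Hs. assert (~ spec X (xs b) (xs b)) by (rewrite <- H; auto).
    apply H0. intros U _ u; auto.
  - assert (H := f_equal (fun p : Cs => p a) E). simpl in H. unfold fmap in H.
    apply NNPP; intro Hs. assert (~ spec X (xs a) (xs a)) by (rewrite H; auto).
    apply H0. intros U _ u; auto.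
Qed.

Fixpoint pref {A : Type} (nx : list A -> A) (n : nat) : list A :=
  match n with 0 => nil | S n => nx (pref nx n) :: pref nx n end.

Lemma pref_in {A} (nx : list A -> A) k n : k < n -> In (nx (pref nx k)) (pref nx n).
Proof.
  induction n as [|n IH]; intros H; [lia|]. simpl.
  destruct (Nat.eq_dec k n) as [->|ne]; [left; auto| right; apply IH; lia].
Qed.

Lemma inj_seq (X : Type) : (forall l : list X, exists x, ~ In x l) ->
  exists xs : nat -> X, forall a b, xs a = xs b -> a = b.
Proof.
  intros H. set (nx := fun l => proj1_sig (constructive_indefinite_description _ (H l))).
  assert (Hnx : forall l, ~ In (nx l) l).
  { intros l. unfold nx. destruct constructive_indefinite_description; auto. }
  exists (fun n => nx (pref nx n)). intros a b E.
  destruct (Nat.lt_trichotomy a b) as [lt|[eq|gt]]; auto; exfalso.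
  - apply (Hnx (pref nx b)). rewrite <- E. apply pref_in; auto.
  - apply (Hnx (pref nx a)). rewrite E. apply pref_in; auto.
Qed.
Definition Ix (d : nat -> Cs) := {B : Cs -> Prop | J d B}.
Definition leI (d : nat -> Cs) (B B' : Ix d) := forall y, proj1_sig B y -> proj1_sig B' y.
Definition ZI (d : nat -> Cs) (B : Ix d) : Top0 := subT Cs (proj1_sig B).
Definition zI (d : nat -> Cs) (B B' : Ix d) (h : leI d B B') : ZI d B -> ZI d B' :=
  fun p => exist _ (proj1_sig p) (h _ (proj2_sig p)).
Definition cI (d : nat -> Cs) (B : Ix d) : ZI d B -> Cs := fun p => proj1_sig p.

Lemma Ix_directed d : directed_poset (leI d).
Proof.
  split; [|split; [|split]].
  - intros B y; auto.
  - intros B1 B2 B3 h1 h2 y Hy; auto.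
  - intros B B' h1 h2. apply sig_eq. apply functional_extensionality; intro y.
    apply propositional_extensionality; split; auto.
  - intros s.
    assert (Hs : J d (fun y => exists B, In B s /\ proj1_sig B y)).
    { induction s as [|B s IH].
      - apply K0_atmost1. intros n n' [B [[] _]].
      - apply K0_mono with (fun n => proj1_sig B (d n) \/ (exists B, In B s /\ proj1_sig B (d n))).
        + apply K0_union; auto. exact (proj2_sig B).
        + intros n [B' [[<-|HB'] H]]; [left; auto| right; eauto]. }
    exists (exist _ _ Hs). intros B HB y Hy. simpl. eauto.
Qed.

Lemma Ix_emb d : embedding_diagram (leI d) (ZI d) (zI d).
Proof.
  split; [|split].
  - intros B B' h. split; [|split].
    + intros x y E. apply sig_eq. exact (f_equal (@proj1_sig _ _) E).
    + intros V [V' [HV' EV']]. exists V'. split; auto.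
    + intros U [V [HV EV]]. exists (fun q => V (proj1_sig q)). split.
      * exists V; split; auto; tauto.
      * intros x. rewrite EV. simpl. tauto.
  - intros B h x. apply sig_eq. reflexivity.
  - intros B1 B2 B3 h1 h2 h3 x. apply sig_eq. reflexivity.
Qed.

Lemma Ix_colim d (dinj : forall a b, d a = d b -> a = b) :
  is_colimit (leI d) (ZI d) (zI d) Cs (cI d).
Proof.
  split; [|split].
  - intros B V HV. exists V. split; auto. tauto.
  - intros B B' h x. reflexivity.
  - intros Y dd Hdd Hcomp.
    assert (Js : forall y : Cs, J d (fun q => q = y)).
    { intros y. apply K0_atmost1. intros n n' E1 E2. apply dinj. congruence. }
    set (sB := fun y : Cs => exist (J d) (fun q => q = y) (Js y) : Ix d).
    set (u := fun y : Cs => dd (sB y) (exist _ y eq_refl)).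
    assert (Hu : forall B (p : ZI d B), u (proj1_sig p) = dd B p).
    { intros B p. unfold u.
      assert (h : leI d (sB (proj1_sig p)) B).
      { intros q e. simpl in e. subst q. exact (proj2_sig p). }
      rewrite <- (Hcomp _ _ h). f_equal. apply sig_eq. reflexivity. }
    exists u. split; [|split].
    + intros V HV. apply (final_open d dinj). intros B HB.
      destruct (Hdd (exist _ B HB) V HV) as [V' [HV' EV']].
      exists V'. split; auto. intros y By.
      pose proof (Hu (exist _ B HB) (exist _ y By)) as E. simpl in E. rewrite E.
      apply (EV' (exist _ y By)).
    + intros B x. apply Hu.
    + intros u' _ Hu' y. exact (Hu' (sB y) (exist _ y eq_refl)).
Qed.

Lemma infinite_not_fg (X : Top0) : ~ finite_space X -> ~ fin_gen_emb X.
Proof.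
  intros Hnf Hfg.
  assert (Hl : forall l : list X, exists x, ~ In x l).
  { intros l. apply NNPP; intro H. apply Hnf. exists l. intros x. apply NNPP; intro H'.
    apply H; eauto. }
  destruct (inj_seq X Hl) as [xs Hxs].
  set (d := fun n => fmap X xs (xs n)).
  assert (dinj : forall a b, d a = d b -> a = b) by (intros a b; apply fmap_inj; auto).
  destruct (Hfg _ (leI d) (ZI d) (zI d) Cs (cI d) (Ix_directed d) (Ix_emb d) (Ix_colim d dinj))
    as [H1 _].
  destruct (H1 (fmap X xs) (fmap_cont X xs)) as [B [g [_ Hg]]].
  apply K0_full. apply K0_mono with (fun n => proj1_sig B (d n)).
  - exact (proj2_sig B).
  - intros n _. unfold d. rewrite Hg. exact (proj2_sig (g (xs n))).
Qed.

Theorem theorem5p5 : forall X : Top0, fin_gen_emb X <-> finite_space X.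
Proof.
  intros X. split.
  - intros H. apply NNPP. intros Hn. exact (infinite_not_fg X Hn H).
  - apply finite_fg.
Qed.
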